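(* Normalize $\operatorname{var}(X)=1$ and $\operatorname{var}(W_1)=I_{d_1}$, suppose $\operatorname{var}(Y,X,W_1)$ is positive definite, $\sigma_{W_1,Y}\ne\sigma_{X,Y}\sigma_{W_1,X}$, and $\|c\|<1$. For any $r_X\in\mathbb R^{d_1}$ with $r_X'c\ne-1$ and $0<z_X(r_X,c)^2<k_0$, $$\bigcup_{r_Y\in\mathbb R^{d_1}}\mathcal B(r_X,r_Y,c)=\big(\beta_{\text{med}}-\sqrt{\text{devsq}(z_X(r_X,c))},\ \beta_{\text{med}}+\sqrt{\text{devsq}(z_X(r_X,c))}\big)\setminus\mathcal B^0,$$ where $\mathcal B^0$ is a set containing at most one point.
   Context: For random vectors $A,B$ with $\operatorname{var}(B)$ invertible, $A^{\perp B}=A-\operatorname{cov}(A,B)\operatorname{var}(B)^{-1}B$. $\sigma_{A,B}=\operatorname{cov}(A,B)$. $\beta_{\text{med}}$ is the coefficient on $X$ in the linear projection of $Y$ on $(1,X,W_1)$. $k_0=\operatorname{var}(X^{\perp W_1})$, $k_1=\operatorname{cov}(Y^{\perp W_1},X^{\perp W_1})$; $\text{devsq}(z)=\frac{\operatorname{var}(Y^{\perp X,W_1})}{k_0}\frac{z^2}{k_0-z^2}$; $z_X(r_X,c)=\frac{r_X'\sigma_{W_1,X}\sqrt{1-\|c\|^2}}{1+r_X'c}$. For $r_X,r_Y,c\in\mathbb R^{d_1}$, $\mathcal B(r_X,r_Y,c)$ is the set of $b\in\mathbb R$ such that for some $(p_1,g_1)\in\mathbb R^{d_1}\times\mathbb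 R^{d_1}$ (with $\Sigma_{\text{obs}}=\operatorname{var}(W_1)$): $\operatorname{cov}(Y,X)=b\operatorname{var}(X)+g_1'(\Sigma_{\text{obs}}+cr_X'+r_Yc'+r_Yr_X')p_1$; $\operatorname{cov}(Y,W_1)=b\operatorname{cov}(X,W_1)+g_1'(\Sigma_{\text{obs}}+r_Yc')$; $\operatorname{cov}(X,W_1)=p_1'(\Sigma_{\text{obs}}+r_Xc')$; $\operatorname{var}(Y)>b^2\operatorname{var}(X)+g_1'(\Sigma_{\text{obs}}+r_Yr_Y'+2r_Yc')g_1+2bg_1'(\Sigma_{\text{obs}}+cr_X'+r_Yc'+r_Yr_X')p_1$; $\operatorname{var}(X)>p_1'(\Sigma_{\text{obs}}+2r_Xc'+r_Xr_X')p_1$; $1>c'\Sigma_{\text{obs}}^{-1}c$. *)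

(* Defs.v *)
(* Second-moment model of (Y, X, W_1): everything in the
   statement depends on the random vectors only through their joint
   covariance matrix, which we take as the primitive data. *)
From HB Require Import structures.
From mathcomp Require Import all_boot all_order all_algebra.
From mathcomp Require Import reals.
Set Implicit Arguments. Unset Strict Implicit. Unset Printing Implicit Defensive.
Import Order.TTheory GRing.Theory Num.Theory.
Local Open Scope ring_scope.

Section Defs.
Variable R : realType.
Variable d1 : nat.

(* Second moments:  vY = var Y, vX = var X, sXY = cov(X,Y),
   sWY = cov(W1,Y), sWX = cov(W1,X) (column vectors), SW = var W1. *)

Definition sc (M : 'M[R]_1) : R := M 0 0.

Definition vnorm (c : 'cV[R]_d1) : R := Num.sqrt (sc (c^T *m c)).

(* var(Y, X, W1) as a (2 + d1) x (2 + d1) matrix, ordered (Y, X, W1) *)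
Definition jointVar (vY vX sXY : R) (sWY sWX : 'cV[R]_d1) (SW : 'M[R]_d1)
  : 'M[R]_(2 + d1) :=
  block_mx (\matrix_(i < 2, j < 2)
              (if (i == 0 :> nat) && (j == 0 :> nat) then vY
               else if (i == 1 :> nat) && (j == 1 :> nat) then vX else sXY))
           (col_mx sWY^T sWX^T)
           (row_mx sWY sWX) SW.

Definition posdef n (M : 'M[R]_n) : Prop :=
  forall v : 'cV[R]_n, v != 0 -> 0 < sc (v^T *m M *m v).

Definition varXW (vX : R) (sWX : 'cV[R]_d1) (SW : 'M[R]_d1) : 'M[R]_(1 + d1) :=
  block_mx vX%:M sWX^T sWX SW.
Definition covXWY (sXY : R) (sWY : 'cV[R]_d1) : 'cV[R]_(1 + d1) :=
  col_mx sXY%:M sWY.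

(* beta_med: coefficient on X in the linear projection of Y on (1, X, W1) *)
Definition beta_med (vX sXY : R) (sWY sWX : 'cV[R]_d1) (SW : 'M[R]_d1) : R :=
  (invmx (varXW vX sWX SW) *m covXWY sXY sWY) 0 0.

Definition varY_perp_XW (vY vX sXY : R) (sWY sWX : 'cV[R]_d1) (SW : 'M[R]_d1) : R :=
  vY - sc ((covXWY sXY sWY)^T *m invmx (varXW vX sWX SW) *m covXWY sXY sWY).

(* k0 = var(X^{perp W1}) *)
Definition k0 (vX : R) (sWX : 'cV[R]_d1) (SW : 'M[R]_d1) : R :=
  vX - sc (sWX^T *m invmx SW *m sWX).

(* k1 = cov(Y^{perp W1}, X^{perp W1}) *)
Definition k1 (sXY : R) (sWY sWX : 'cV[R]_d1) (SW : 'M[R]_d1) : R :=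
  sXY - sc (sWY^T *m invmx SW *m sWX).

Definition devsq (vY vX sXY : R) (sWY sWX : 'cV[R]_d1) (SW : 'M[R]_d1) (z : R) : R :=
  varY_perp_XW vY vX sXY sWY sWX SW / k0 vX sWX SW
  * (z ^+ 2 / (k0 vX sWX SW - z ^+ 2)).

Definition zX (sWX : 'cV[R]_d1) (rX c : 'cV[R]_d1) : R :=
  sc (rX^T *m sWX) * Num.sqrt (1 - vnorm c ^+ 2) / (1 + sc (rX^T *m c)).

Definition Bset (vY vX sXY : R) (sWY sWX : 'cV[R]_d1) (SW : 'M[R]_d1)
  (rX rY c : 'cV[R]_d1) (b : R) : Prop :=
  exists p1 g1 : 'cV[R]_d1,
    [/\ sXY = b * vX
              + sc (g1^T *m (SW + c *m rX^T + rY *m c^T + rY *m rX^T) *m p1),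
        sWY^T = b *: sWX^T + g1^T *m (SW + rY *m c^T),
        sWX^T = p1^T *m (SW + rX *m c^T) &
      [/\
        b ^+ 2 * vX + sc (g1^T *m (SW + rY *m rY^T + 2%:R *: (rY *m c^T)) *m g1)
          + 2%:R * b * sc (g1^T *m (SW + c *m rX^T + rY *m c^T + rY *m rX^T) *m p1)
          < vY,
        sc (p1^T *m (SW + 2%:R *: (rX *m c^T) + rX *m rX^T) *m p1) < vX
      & sc (c^T *m invmx SW *m c) < 1]].

End Defs.

(* Main.v *)
Require Import Defs.
From HB Require Import structures.
From mathcomp Require Import all_boot all_order all_algebra.
From mathcomp Require Import reals.
From mathcomp Require Import ring lra.
Import Order.TTheory GRing.Theory Num.Theory.
Set Implicit Arguments. Unset Strict Implicit.
Local Open Scope ring_scope.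

Section Aux.
Variable R : realType.
Variable n : nat.
Implicit Types (u v w x y : 'cV[R]_n) (A B : 'M[R]_n).

Definition dot u v : R := sc (u^T *m v).

Lemma sc_mul (M N : 'M[R]_1) : sc (M *m N) = sc M * sc N.
Proof. by rewrite /sc mxE big_ord1. Qed.

Lemma sc_add (M N : 'M[R]_1) : sc (M + N) = sc M + sc N.
Proof. by rewrite /sc mxE. Qed.

Lemma sc_scale k (M : 'M[R]_1) : sc (k *: M) = k * sc M.
Proof. by rewrite /sc mxE. Qed.

Lemma sc_tr (M : 'M[R]_1) : sc (M^T) = sc M.
Proof. by rewrite /sc mxE. Qed.

Lemma dotC u v : dot u v = dot v u.
Proof. by rewrite /dot -sc_tr trmx_mul trmxK. Qed.

Lemma dotDl u v w : dot (u + v) w = dot u w + dot v w.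
Proof. by rewrite /dot linearD /= mulmxDl sc_add. Qed.
Lemma dotDr u v w : dot w (u + v) = dot w u + dot w v.
Proof. by rewrite /dot mulmxDr sc_add. Qed.
Lemma dotZl k u v : dot (k *: u) v = k * dot u v.
Proof. by rewrite /dot linearZ /= -scalemxAl sc_scale. Qed.
Lemma dotZr k u v : dot u (k *: v) = k * dot u v.
Proof. by rewrite /dot -scalemxAr sc_scale. Qed.
Lemma dotNl u v : dot (- u) v = - dot u v.
Proof. by rewrite -scaleN1r dotZl mulN1r. Qed.
Lemma dotNr u v : dot u (- v) = - dot u v.
Proof. by rewrite -scaleN1r dotZr mulN1r. Qed.
Lemma dotBl u v w : dot (u - v) w = dot u w - dot v w.
Proof. by rewrite dotDl dotNl. Qed.
Lemma dotBr u v w : dot w (u - v) = dot w u - dot w v.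
Proof. by rewrite dotDr dotNr. Qed.
Lemma dot0l u : dot 0 u = 0.
Proof. by rewrite -(scale0r 0) dotZl mul0r. Qed.

Lemma dot0r u : dot u 0 = 0.
Proof. by rewrite -(scale0r 0) dotZr mul0r. Qed.

Lemma dot_sum u : dot u u = \sum_i u i 0 ^+ 2.
Proof. by rewrite /dot /sc mxE; apply: eq_bigr => i _; rewrite mxE expr2. Qed.

Lemma dot_ge0 u : 0 <= dot u u.
Proof. by rewrite dot_sum sumr_ge0 // => i _; rewrite sqr_ge0. Qed.

Lemma dot_eq0 u : dot u u = 0 -> u = 0.
Proof.
rewrite dot_sum => /psumr_eq0P H; apply/matrixP => i j.
rewrite (ord1 j) mxE; apply/eqP; rewrite -sqrf_eq0; apply/eqP; apply: H => //.
by move=> k _; rewrite sqr_ge0.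
Qed.

Lemma qf_add x y A B : sc (x^T *m (A + B) *m y) = sc (x^T *m A *m y) + sc (x^T *m B *m y).
Proof. by rewrite mulmxDr mulmxDl sc_add. Qed.
Lemma qf_scale x y k A : sc (x^T *m (k *: A) *m y) = k * sc (x^T *m A *m y).
Proof. by rewrite -scalemxAr -scalemxAl sc_scale. Qed.
Lemma qf_1 x y : sc (x^T *m 1%:M *m y) = dot x y.
Proof. by rewrite mulmx1. Qed.
Lemma qf_outer x y u v : sc (x^T *m (u *m v^T) *m y) = dot x u * dot v y.
Proof. by rewrite !mulmxA -sc_mul -mulmxA. Qed.
Lemma qf_inv1 x y : sc (x^T *m invmx 1%:M *m y) = dot x y.
Proof. by rewrite invmx1 qf_1. Qed.

Lemma rowmul x u v : x^T *m (1%:M + u *m v^T) = x^T + dot x u *: v^T.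
Proof.
by rewrite mulmxDr mulmx1 mulmxA [x^T *m u]mx11_scalar mul_scalar_mx.
Qed.

Lemma trmul2 (u v : 'cV[R]_n) : u^T *m v = (dot u v)%:M.
Proof. exact: mx11_scalar. Qed.

Definition Binv (s : 'cV[R]_n) : 'M[R]_(1 + n) :=
  let k := 1 - dot s s in
  block_mx (k^-1)%:M (- k^-1 *: s^T) (- k^-1 *: s) (1%:M + k^-1 *: (s *m s^T)).

Lemma trmul (s : 'cV[R]_n) : s^T *m s = (dot s s)%:M.
Proof. exact: mx11_scalar. Qed.

Lemma varXW_inv (s : 'cV[R]_n) : 1 - dot s s != 0 ->
  invmx (varXW 1 s 1%:M) = Binv s.
Proof.
move=> hk.
have H : varXW 1 s 1%:M *m Binv s = 1%:M.
  rewrite /varXW /Binv mulmx_block scalar_mx_block.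
  rewrite !mul1mx; f_equal.
  - rewrite -scalemxAr trmul.
    apply/matrixP => i j; rewrite !ord1 !mxE /=; field; done.
  - rewrite mulmxDr mulmx1 -scalemxAr mulmxA trmul mul_scalar_mx.
    apply/matrixP => i j; rewrite !mxE /=; field; done.
  - rewrite mul_mx_scalar.
    apply/matrixP => i j; rewrite !mxE /=; ring.
  - by rewrite -scalemxAr addrCA -scalerDl addNr scale0r addr0.
have [hu _] := mulmx1_unit H.
by rewrite -[RHS]mul1mx -(mulVmx hu) -mulmxA H mulmx1.
Qed.
Lemma bmed (s t : 'cV[R]_n) (sg : R) : 1 - dot s s != 0 ->
  beta_med 1 sg t s 1%:M = (sg - dot t s) / (1 - dot s s).
Proof.
move=> hk; rewrite /beta_med varXW_inv // /Binv /covXWY mul_block_col.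
have -> : (0 : 'I_(1 + n)) = lshift n 0 by apply/val_inj.
rewrite col_mxEu -scalemxAl trmul2 mul_scalar_mx !mxE /= (dotC s t).
field; done.
Qed.

Lemma vperp (vY : R) (s t : 'cV[R]_n) (sg : R) : 1 - dot s s != 0 ->
  varY_perp_XW vY 1 sg t s 1%:M = vY - (dot t t + (sg - dot t s) ^+ 2 / (1 - dot s s)).
Proof.
move=> hk; rewrite /varY_perp_XW varXW_inv // /Binv /covXWY tr_col_mx.
rewrite mul_row_block mul_row_col tr_scalar_mx.
rewrite mulmxDr mulmx1 -!scalemxAr mulmxA !trmul2 !mul_scalar_mx !mulmxDl -!scalemxAl !trmul2 !mul_scalar_mx /sc !mxE /= (dotC s t) !mulr1n.
by field.
Qed.
End Aux.

Lemma core (R : realType) (k0 z2 V k1 b sr : R) : 0 < z2 -> z2 < k0 ->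
  sr = V - k1 ^+ 2 / k0 ->
  ((k1 - b * k0) ^+ 2 / z2 < V - 2%:R * b * k1 + b ^+ 2 * k0) <->
  (k1 / k0 - Num.sqrt (sr / k0 * (z2 / (k0 - z2))) < b /\
   b < k1 / k0 + Num.sqrt (sr / k0 * (z2 / (k0 - z2)))).
Proof.
move=> hz hzk hsr.
have hk : 0 < k0 by apply: lt_trans hzk.
have hkz : 0 < k0 - z2 by rewrite subr_gt0.
set d := b - k1 / k0.
set P := k0 * (k0 - z2) / z2.
have hP : 0 < P by rewrite /P divr_gt0 // mulr_gt0.
have hD : sr / k0 * (z2 / (k0 - z2)) = sr / P.
  rewrite /P; field; rewrite ?lt0r_neq0 //.
have e1 : (k1 - b * k0) ^+ 2 / z2 - (V - 2%:R * b * k1 + b ^+ 2 * k0) = d ^+ 2 * P - sr.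
  rewrite hsr /d /P; field; rewrite ?lt0r_neq0 //.
have step1 : ((k1 - b * k0) ^+ 2 / z2 < V - 2%:R * b * k1 + b ^+ 2 * k0) <-> (d ^+ 2 < sr / P).
  rewrite ltr_pdivlMr // -subr_lt0 e1 subr_lt0; done.
rewrite step1 hD.
have step2 : (d ^+ 2 < sr / P) <-> (`|d| < Num.sqrt (sr / P)).
  case: (ltrP 0 (sr / P)) => hs.
    by rewrite -ltr_sqrt // sqrtr_sqr.
  rewrite ler0_sqrtr //; split => h.
    by have := lt_le_trans h hs; rewrite ltNge sqr_ge0.
  by have := le_lt_trans (normr_ge0 d) h; rewrite ltxx.
rewrite step2 ltr_norml /d.
split => [/andP[h1 h2]|[h1 h2]]; first by split; lra.
by apply/andP; split; lra.
Qed.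


Theorem mainTheorem19 (R : realType) (d1 : nat)
  (vY vX sXY : R) (sWY sWX : 'cV[R]_d1) (SW : 'M[R]_d1)
  (hvX : vX = 1) (hSW : SW = 1%:M)
  (hpd : posdef (jointVar vY vX sXY sWY sWX SW))
  (hne : sWY != sXY *: sWX)
  (c : 'cV[R]_d1) (hc : vnorm c < 1)
  (rX : 'cV[R]_d1) (hrc : sc (rX^T *m c) != -1)
  (hz0 : 0 < zX sWX rX c ^+ 2)
  (hz1 : zX sWX rX c ^+ 2 < k0 vX sWX SW) :
  exists B0 : R -> Prop,
    (forall x y, B0 x -> B0 y -> x = y) /\
    forall b : R,
      (exists rY : 'cV[R]_d1, Bset vY vX sXY sWY sWX SW rX rY c b) <->
      (beta_med vX sXY sWY sWX SW
         - Num.sqrt (devsq vY vX sXY sWY sWX SW (zX sWX rX c)) < b /\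
       b < beta_med vX sXY sWY sWX SW
         + Num.sqrt (devsq vY vX sXY sWY sWX SW (zX sWX rX c)) /\
       ~ B0 b).
Proof.
subst vX SW.
have hcc : dot c c < 1.
  by have := hc; rewrite /vnorm -[X in _ < X]sqrtr1 ltr_sqrt.
have hm : 0 < 1 - dot c c by rewrite subr_gt0.
have he : 1 + dot rX c != 0 by rewrite addrC addr_eq0.
pose a := dot rX sWX. pose e := 1 + dot rX c. pose mm := 1 - dot c c.
pose lam := a / e.
have hz2 : zX sWX rX c ^+ 2 = lam ^+ 2 * mm.
  rewrite /zX /vnorm -/(dot rX sWX) -/(dot rX c) -/(dot c c) sqr_sqrtr ?dot_ge0 // expr_div_n exprMn sqr_sqrtr; last exact: ltW hm.
  by rewrite /lam /a /e /mm; field.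
have hlam : lam != 0.
  by apply/eqP => h; move: hz0; rewrite hz2 h expr2 !mul0r ltxx.
have ha : a != 0 by apply: contraNneq hlam => h; rewrite /lam h mul0r.
have hk0 : k0 1 sWX 1%:M = 1 - dot sWX sWX by rewrite /k0 qf_inv1.
have hzpos : 0 < lam ^+ 2 * mm by rewrite -hz2.
have hz2k : lam ^+ 2 * mm < 1 - dot sWX sWX by rewrite -hz2 -hk0.
have hK : 0 < 1 - dot sWX sWX by apply: lt_trans hz2k.
have hKne : 1 - dot sWX sWX != 0 by rewrite lt0r_neq0.
rewrite /devsq hk0 vperp // bmed // hz2.
pose K0 := 1 - dot sWX sWX. pose K1 := sXY - dot sWY sWX.
pose bf := fun x => (K1 - x * K0) / (lam * mm).
exists (fun x => sWY - x *: sWX - bf x *: c = 0 /\ bf x != 0).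
have hmne : mm != 0 by rewrite lt0r_neq0.
split.
  move=> x y [Hx hx] [Hy hy].
  case: (eqVneq x y) => // hxy; exfalso.
  have hs : sWX = (K0 / (lam * mm)) *: c.
    apply/matrixP => i j; move/matrixP: Hx => /(_ i j); move/matrixP: Hy => /(_ i j).
    rewrite !mxE => hy' hx'.
    have E : (x - y) * (sWX i j - K0 / (lam * mm) * c i j) =
      (sWY i j - y * sWX i j - bf y * c i j) - (sWY i j - x * sWX i j - bf x * c i j).
      by rewrite /bf; field; rewrite ?hmne ?hlam.
    move: E; rewrite hx' hy' subrr => /eqP; rewrite mulf_eq0 subr_eq0 (negbTE hxy) /=.
    by rewrite subr_eq0 => /eqP.
  have ht : sWY = (K1 / (lam * mm)) *: c.
    rewrite hs in Hx.
    apply/matrixP => i j; move/matrixP: Hx => /(_ i j); rewrite !mxE => hx'.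
    by rewrite -[LHS]subr0 -hx' /bf; field; rewrite ?hmne ?hlam.
  have hss : dot sWX sWX = (K0 / (lam * mm)) ^+ 2 * dot c c.
    by rewrite {1 2}hs dotZl dotZr expr2 mulrA.
  have hts : dot sWY sWX = (K1 / (lam * mm)) * (K0 / (lam * mm)) * dot c c.
    by rewrite {1}hs {1}ht dotZl dotZr mulrA.
  have e0 : K0 = 1 - (K0 / (lam * mm)) ^+ 2 * dot c c by rewrite -hss.
  have e1 : K1 = sXY - (K1 / (lam * mm)) * (K0 / (lam * mm)) * dot c c by rewrite -hts.
  have key : (K1 - sXY * K0) * (1 + K0 * (dot c c / (lam * mm) ^+ 2)) =
    (K1 - (sXY - (K1 / (lam * mm)) * (K0 / (lam * mm)) * dot c c))
    - sXY * (K0 - (1 - (K0 / (lam * mm)) ^+ 2 * dot c c)).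
    by field; rewrite ?hmne ?hlam.
  rewrite -e0 -e1 !subrr mulr0 subr0 in key.
  have hpos : 0 < 1 + K0 * (dot c c / (lam * mm) ^+ 2).
    apply: (lt_le_trans ltr01); rewrite lerDl mulr_ge0 ?(ltW hK) //.
    by rewrite divr_ge0 ?dot_ge0 ?sqr_ge0.
  move/eqP: key; rewrite mulf_eq0 (gt_eqF hpos) orbF subr_eq0 => /eqP hK1e.
  by move: hne; rewrite ht hs scalerA hK1e mulrA eqxx.
move=> b.
have hsr : vY - (dot sWY sWY + (sXY - dot sWY sWX) ^+ 2 / (1 - dot sWX sWX)) =
  (vY - dot sWY sWY) - (sXY - dot sWY sWX) ^+ 2 / (1 - dot sWX sWX) by ring.
have C := @core R _ _ (vY - dot sWY sWY) (sXY - dot sWY sWX) b _ hzpos hz2k hsr.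
split.
  case=> q [p [g [H1 H2 H3 [H4 H5 H6]]]].
  move: H4; rewrite -[X in 2%:R * b * X](addKr (b * 1)) -H1 => H4.
  have hsp : sWX = p + dot p rX *: c.
    apply/matrixP => i j; rewrite !mxE; move: H3; rewrite rowmul => /matrixP /(_ j i).
    by rewrite !mxE.
  have hl : dot p rX = lam.
    have := congr1 (dot rX) hsp; rewrite dotDr dotZr (dotC rX p) => h.
    by rewrite /lam /a /e h; field.
  have hp : p = sWX - lam *: c by rewrite hsp hl addrK.
  have hg : g = sWY - b *: sWX - dot g q *: c.
    apply/matrixP => i j; rewrite !mxE; move: H2; rewrite rowmul => /matrixP /(_ j i).
    by rewrite !mxE => ->; ring.
  rewrite !qf_add qf_1 !qf_outer in H1.
  rewrite !qf_add !qf_scale qf_1 !qf_outer (dotC q g) in H4.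
  have [β hβ] : exists β, dot g q = β by eexists.
  rewrite hβ in hg H1 H4.
  rewrite (dotC rX p) hl in H1.
  subst p; subst g.
  rewrite ?(dotBl, dotBr, dotNl, dotNr, dotZl, dotZr, dotDl, dotDr) in H1.
  rewrite ?(dotBl, dotBr, dotNl, dotNr, dotZl, dotZr, dotDl, dotDr) in H4.
  rewrite ?(dotC sWX sWY) ?(dotC c sWX) ?(dotC c sWY) ?(dotC sWX rX) ?(dotC c rX) ?(dotC sWY rX) in H1 H4.
  have hmm : dot c c = 1 - mm by rewrite /mm; ring.
  rewrite hmm in H1 H4.
  have hβv : β = bf b.
    by rewrite /bf /K1 /K0 H1; field; rewrite ?hmne ?hlam.
  have hI : (sXY - dot sWY sWX - b * (1 - dot sWX sWX)) ^+ 2 / (lam ^+ 2 * mm) <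
    vY - dot sWY sWY - 2%:R * b * (sXY - dot sWY sWX) + b ^+ 2 * (1 - dot sWX sWX).
    have -> : (sXY - dot sWY sWX - b * (1 - dot sWX sWX)) ^+ 2 / (lam ^+ 2 * mm)
      = β ^+ 2 * mm by rewrite hβv /bf /K1 /K0; field; rewrite ?hmne ?hlam.
    lra.
  have [h1 h2] := (proj1 C) hI.
  split=> //; split=> //.
  move=> [hz0' hb0]; rewrite -hβv in hz0' hb0.
  by rewrite hz0' dot0l in hβ; rewrite -hβ eqxx in hb0.
move=> [h1 [h2 hB0]].
have hI := (proj2 C) (conj h1 h2).
have hmm : dot c c = 1 - mm by rewrite /mm; ring.
pose β := bf b.
pose g := sWY - b *: sWX - β *: c.
pose p := sWX - lam *: c.
have [q hq] : exists q, dot g q = β.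
  case: (eqVneq g 0) => hg0.
    exists 0; rewrite dot0r.
    case: (eqVneq β 0) => // hb; exfalso; exact: hB0 (conj hg0 hb).
  have hgg : dot g g != 0 by apply/eqP => /dot_eq0 /eqP; rewrite (negbTE hg0).
  by exists ((β / dot g g) *: g); rewrite dotZr divfK.
have hpr : dot p rX = lam.
  rewrite /p dotBl dotZl (dotC sWX rX) (dotC c rX) -/a.
  by rewrite /lam /e; field.
have H1 : sXY = b * 1 + sc (g^T *m (1%:M + c *m rX^T + q *m c^T + q *m rX^T) *m p).
  rewrite !qf_add qf_1 !qf_outer hq (dotC rX p) hpr /g /p.
  rewrite ?(dotBl, dotBr, dotNl, dotNr, dotZl, dotZr, dotDl, dotDr).
  rewrite ?(dotC sWX sWY) ?(dotC c sWX) ?(dotC c sWY) ?(dotC sWX rX) ?(dotC c rX) ?(dotC sWY rX).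
  by rewrite hmm /β /bf /K1 /K0; field; rewrite ?hmne ?hlam.
exists q; rewrite /Bset; exists p, g; split.
- exact: H1.
- rewrite rowmul hq /g; apply/matrixP => i j; rewrite !mxE; ring.
- rewrite rowmul hpr /p; apply/matrixP => i j; rewrite !mxE; ring.
- split.
  + rewrite -[X in 2%:R * b * X](addKr (b * 1)) -H1.
    rewrite !qf_add !qf_scale qf_1 !qf_outer (dotC q g) hq /g.
    rewrite ?(dotBl, dotBr, dotNl, dotNr, dotZl, dotZr, dotDl, dotDr).
    rewrite ?(dotC sWX sWY) ?(dotC c sWX) ?(dotC c sWY) ?(dotC sWX rX) ?(dotC c rX) ?(dotC sWY rX).
    have E : (sXY - dot sWY sWX - b * (1 - dot sWX sWX)) ^+ 2 / (lam ^+ 2 * mm)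
      = β ^+ 2 * mm by rewrite /β /bf /K1 /K0; field; rewrite ?hmne ?hlam.
    rewrite E in hI; rewrite hmm; lra.
  + rewrite !qf_add !qf_scale qf_1 !qf_outer (dotC rX p) hpr /p.
    rewrite ?(dotBl, dotBr, dotNl, dotNr, dotZl, dotZr, dotDl, dotDr).
    rewrite ?(dotC sWX sWY) ?(dotC c sWX) ?(dotC c sWY) ?(dotC sWX rX) ?(dotC c rX) ?(dotC sWY rX).
    rewrite hmm; lra.
  + by rewrite qf_inv1.
Qed.
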